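(* Let $X$ and $Y$ be Tychonoff spaces with $Y$ a $P$-space, and let $f:X\to Y$ be a nearly perfect mapping. Then $f(N(X))=N(Y)$.
   Context: A space $X$ is Menger if for each sequence $(\mathcal{U}_n)$ of open covers of $X$ there is a sequence $(\mathcal{V}_n)$ with each $\mathcal{V}_n$ a finite subset of $\mathcal{U}_n$ and $\bigcup_{n}\bigcup\mathcal{V}_n=X$. $X$ is locally Menger at $x$ if there are an open set $U$ and a Menger subspace $M$ of $X$ with $x\in U\subseteq M$; $N(X)$ denotes the set of points of $X$ at which $X$ is not locally Menger. A $P$-space is a space in which every countable intersection of open sets is open. A mapping $f:X\to Y$ is nearly perfect if it is a closed continuous surjection such that $f^{-1}(y)$ is Menger for every $y\in Y$. *)

(* Defs.v *)
From HB Require Import structures.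
From mathcomp Require Import all_boot all_algebra.
From mathcomp Require Import all_classical all_reals all_analysis.
From mathcomp Require Import Rstruct Rstruct_topology.
Set Implicit Arguments. Unset Strict Implicit. Unset Printing Implicit Defensive.
Import numFieldNormedType.Exports.
Local Open Scope classical_set_scope.

Definition tychonoff_space (T : topologicalType) : Prop :=
  @accessible_space T /\
  forall (x : T) (B : set T), closed B -> ~ B x ->
    exists f : T -> Rdefinitions.R,
      continuous f /\ f x = 0%R /\ (forall b, B b -> f b = 1%R).

(** The subspace A of T is Menger.  Open covers of the subspace A are
    represented (as usual) by families of open sets of T covering A. *)
Definition menger_set (T : topologicalType) (A : set T) : Prop :=
  forall U : nat -> set (set T),
    (forall n, (forall W, U n W -> open W) /\ A `<=` \bigcup_(W in U n) W) ->
    exists V : nat -> set (set T),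
      (forall n, finite_set (V n) /\ V n `<=` U n) /\
      A `<=` \bigcup_n \bigcup_(W in V n) W.

Definition locally_menger_at (T : topologicalType) (x : T) : Prop :=
  exists (U M : set T), open U /\ menger_set M /\ U x /\ U `<=` M.

Definition N_set (T : topologicalType) : set T :=
  [set x | ~ locally_menger_at x].

Definition P_space (T : topologicalType) : Prop :=
  forall G : nat -> set T, (forall n, open (G n)) -> open (\bigcap_n G n).

Definition closed_map (S T : topologicalType) (f : S -> T) : Prop :=
  forall C : set S, closed C -> closed (f @` C).

Definition nearly_perfect (S T : topologicalType) (f : S -> T) : Prop :=
  [/\ closed_map f, continuous f, (forall y : T, exists x, f x = y) &
      (forall y : T, menger_set (f @^-1` [set y]))].
Arguments N_set T : clear implicits.

(* Main.v *)
Require Import Defs.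
From mathcomp Require Import all_boot all_algebra.
From mathcomp Require Import all_classical all_reals all_analysis.
From Stdlib Require Cantor.
Local Open Scope classical_set_scope.

Lemma menger0 (T : topologicalType) : menger_set (@set0 T).
Proof.
move=> U _; exists (fun _ => set0); split => //.
by move=> n; split; [exact: finite_set0| exact: sub0set].
Qed.

Lemma menger_bigcup (T : topologicalType) (M : nat -> set T) :
  (forall k, menger_set (M k)) -> menger_set (\bigcup_k M k).
Proof.
move=> HM U HU.
have H k : exists V : nat -> set (set T),
   (forall m, finite_set (V m) /\ V m `<=` U (Cantor.to_nat (k, m))) /\
   M k `<=` \bigcup_m \bigcup_(W in V m) W.
  apply: HM => m; split; first exact: (HU _).1.
  by move=> x Mx; apply: (HU _).2; exists k.
have [VV HVV] := choice H.
exists (fun n => VV (Cantor.of_nat n).1 (Cantor.of_nat n).2); split.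
  move=> n; have := (HVV (Cantor.of_nat n).1).1 (Cantor.of_nat n).2.
  by rewrite -surjective_pairing Cantor.cancel_to_of.
move=> x [k _ Mkx].
have [m _ [W VW Wx]] := (HVV k).2 x Mkx.
exists (Cantor.to_nat (k, m)) => //; exists W => //.
by rewrite Cantor.cancel_of_to.
Qed.

Lemma menger_bigcup_countable (T : topologicalType) (I : Type) (D : set I)
  (M : I -> set T) :
  countable D -> (forall i, D i -> menger_set (M i)) ->
  menger_set (\bigcup_(i in D) M i).
Proof.
move=> /countable_injP [h hinj] HM.
have [[i0 Di0]|Dn0] := pselect (exists i, D i); last first.
  have -> : \bigcup_(i in D) M i = set0.
    by apply/seteqP; split => x // [i Di _]; case: Dn0; exists i.
  exact: menger0.
have Hg n : exists i, (exists j, D j /\ h j = n) -> D i /\ h i = n.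
  have [[j Hj]|nj] := pselect (exists j, D j /\ h j = n).
    by exists j.
  by exists i0.
have [g Hgn] := choice Hg.
have -> : \bigcup_(i in D) M i = \bigcup_n [set x | D (g n) /\ M (g n) x].
  apply/seteqP; split.
    move=> x [i Di Mix]; exists (h i) => //.
    have [Dg hg] := Hgn (h i) (ex_intro _ i (conj Di erefl)).
    have gi : g (h i) = i.
      by apply: hinj; [exact: mem_set | exact: mem_set | exact: hg].
    by rewrite /= gi.
  by move=> x [n _ [Dg Mx]]; exists (g n).
apply: menger_bigcup => n.
have [Dg|nDg] := pselect (D (g n)).
  have -> : [set x | D (g n) /\ M (g n) x] = M (g n).
    by apply/seteqP; split => x /=; [case|split].
  exact: HM.
have -> : [set x | D (g n) /\ M (g n) x] = set0.
  by apply/seteqP; split => x //= [].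
exact: menger0.
Qed.

Lemma menger_image (S T : topologicalType) (f : S -> T) (A : set S) :
  continuous f -> menger_set A -> menger_set (f @` A).
Proof.
move=> /continuousP fc HA U HU.
pose U' n := [set f @^-1` W | W in U n].
have HU' n : (forall P, U' n P -> open P) /\ A `<=` \bigcup_(P in U' n) P.
  split; first by move=> P [W UW <-]; apply: fc; exact: (HU n).1.
  move=> x Ax; have [W UW Wfx] := (HU n).2 (f x) (ex_intro2 _ _ x Ax erefl).
  by exists (f @^-1` W) => //; exists W.
have [V' [HV'1 HV'2]] := HA U' HU'.
have Hg (np : nat * set S) : exists W, U' np.1 np.2 -> U np.1 W /\ np.2 = f @^-1` W.
  have [[W UW <-]|nP] := pselect (U' np.1 np.2).
    by exists W.
  by exists set0.
have [g Hg'] := choice Hg.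
exists (fun n => [set g (n, P) | P in V' n]); split.
  move=> n; split; first exact: finite_image (HV'1 n).1.
  by move=> _ [P VP <-]; apply: (Hg' (n, P) _).1; apply: (HV'1 n).2.
move=> _ [x Ax <-].
have [n _ [P VP Px]] := HV'2 x Ax.
exists n => //; exists (g (n, P)); first by exists P.
have [_ /= PE] := (Hg' (n, P)) ((HV'1 n).2 _ VP).
by move: Px; rewrite {1}PE.
Qed.

Lemma menger_preimage (S T : topologicalType) (f : S -> T) (M : set T) :
  closed_map f -> (forall y, menger_set (f @^-1` [set y])) ->
  menger_set M -> menger_set (f @^-1` M).
Proof.
move=> fcl Hfib HM.
have [[y0 _]|M0] := pselect (exists y, M y); last first.
  have -> : f @^-1` M = set0.
    by apply/seteqP; split => x // Mx; case: M0; exists (f x).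
  exact: menger0.
move=> U HU.
have H1 (ky : nat * T) : exists V : nat -> set (set S),
   (forall m, finite_set (V m) /\ V m `<=` U (Cantor.to_nat (ky.1, m))) /\
   (M ky.2 -> f @^-1` [set ky.2] `<=` \bigcup_m \bigcup_(W in V m) W).
  have [My|nMy] := pselect (M ky.2).
    have := Hfib ky.2 (fun m => U (Cantor.to_nat (ky.1, m))); case.
      move=> m; split; first exact: (HU _).1.
      move=> x fx; apply: (HU _).2; rewrite /preimage /=.
      by move: fx; rewrite /preimage /= => ->.
    move=> V [HV1 HV2]; exists V; split=> // _; exact HV2.
  exists (fun _ => set0); split => [m|//]; split; [exact: finite_set0| exact: sub0set].
have [Vf HVf] := choice H1.
pose G k y := \bigcup_m \bigcup_(W in Vf (k, y) m) W.
pose O k y := ~` (f @` ~` G k y).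
pose C k := [set O k y | y in M].
have HC k : (forall P, C k P -> open P) /\ M `<=` \bigcup_(P in C k) P.
  split.
    move=> _ [y My <-]; rewrite /O openC; apply: fcl; rewrite closedC.
    apply: bigcup_open => m _; apply: bigcup_open => W VW.
    exact: (HU _).1 (((HVf (k, y)).1 m).2 _ VW).
  move=> y My; exists (O k y); first by exists y.
  move=> [x nGx fxy]; apply: nGx; exact: ((HVf (k, y)).2 My).
have [F [HF1 HF2]] := HM C HC.
have Hys (kP : nat * set T) : exists y, C kP.1 kP.2 -> M y /\ kP.2 = O kP.1 y.
  have [[y My <-]|nP] := pselect (C kP.1 kP.2).
    by exists y.
  by exists y0.
have [ys Hys'] := choice Hys.
exists (fun n => \bigcup_(P in F (Cantor.of_nat n).1)
   Vf ((Cantor.of_nat n).1, ys ((Cantor.of_nat n).1, P)) (Cantor.of_nat n).2).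
split.
  move=> n; split.
    apply: bigcup_finite; first exact: (HF1 _).1.
    by move=> P _; exact: ((HVf _).1 _).1.
  move=> W [P _ VW].
  have := ((HVf ((Cantor.of_nat n).1, ys ((Cantor.of_nat n).1, P))).1 (Cantor.of_nat n).2).2 W VW.
  have E : Cantor.to_nat ((Cantor.of_nat n).1, (Cantor.of_nat n).2) = n.
    by rewrite -surjective_pairing Cantor.cancel_to_of.
  by move=> h; rewrite -E; exact: h.
move=> x Mfx.
have [k _ [P FP Pfx]] := HF2 (f x) Mfx.
have [My PE] := Hys' (k, P) ((HF1 k).2 _ FP).
move: Pfx; rewrite /= in PE; rewrite PE => Ofx.
have : G k (ys (k, P)) x by apply: contrapT => nG; apply: Ofx; exists x.
move=> [m _ [W VW Wx]].
exists (Cantor.to_nat (k, m)) => //; exists W => //.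
by rewrite Cantor.cancel_of_to /=; exists P.
Qed.

Theorem theorem5p15 (X Y : topologicalType) (f : X -> Y) :
  tychonoff_space X -> tychonoff_space Y -> P_space Y -> nearly_perfect f ->
  f @` N_set X = N_set Y.
Proof.
move=> _ _ _ [fcl fc fsurj Hfib].
apply/seteqP; split.
  move=> _ [x NX <-] [U [M [oU [mM [Ufx UM]]]]].
  apply: NX; exists (f @^-1` U), (f @^-1` M); split; [|split;[|split]].
  - by move/continuousP: fc; apply.
  - exact: menger_preimage.
  - exact Ufx.
  - by move=> z; apply: UM.
move=> y Ny; apply: contrapT => nfy; apply: Ny.
have H x : exists UM : set X * set X, f x = y ->
    [/\ open UM.1, menger_set UM.2, UM.1 x & UM.1 `<=` UM.2].
  have [fxy|fxy] := pselect (f x = y); last by exists (set0, set0).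
  have : locally_menger_at x.
    by apply: contrapT => nlm; apply: nfy; exists x.
  by move=> [U [M [? [? [? ?]]]]]; exists (U, M).
have [um Hum] := choice H.
pose Cov := [set (um x).1 | x in f @^-1` [set y]].
have HCov : forall n : nat, (forall W, Cov W -> open W) /\
    f @^-1` [set y] `<=` \bigcup_(W in Cov) W.
  move=> n; split.
    by move=> _ [x fx <-]; have [] := Hum x fx.
  move=> x fx; exists (um x).1; first by exists x.
  by have [] := Hum x fx.
have [V [HV1 HV2]] := Hfib y (fun _ => Cov) HCov.
pose D := \bigcup_n V n.
have cD : countable D.
  apply: bigcup_countable; first exact: countableP.
  by move=> n _; apply: finite_set_countable; exact: (HV1 n).1.
have [x0 fx0] := fsurj y.
have Hxs W : exists x, D W -> f x = y /\ W = (um x).1.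
  have [[n _ VW]|nD] := pselect (D W); last by exists x0.
  have [x fx <-] := (HV1 n).2 _ VW.
  by exists x.
have [xs Hxs'] := choice Hxs.
pose G := \bigcup_(W in D) W.
pose Mall := \bigcup_(W in D) (um (xs W)).2.
exists (~` (f @` ~` G)), (f @` Mall); split; [|split; [|split]].
- rewrite openC; apply: fcl; rewrite closedC; apply: bigcup_open => W DW.
  have [fx ->] := Hxs' W DW; by have [] := Hum _ fx.
- apply: menger_image => //; apply: menger_bigcup_countable => // W DW.
  have [fx _] := Hxs' W DW; by have [] := Hum _ fx.
- move=> [x nGx fxy]; apply: nGx.
  have [n _ [W VW Wx]] := HV2 x fxy.
  by exists W => //; exists n.
- move=> z Oz; have [x fxz] := fsurj z.
  have : G x by apply: contrapT => nG; apply: Oz; exists x.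
  move=> [W DW Wx]; exists x => //; exists W => //.
  have [fx WE] := Hxs' W DW.
  have [_ _ _ sub] := Hum _ fx; apply: sub; by rewrite -WE.
Qed.
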